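(* Consider a steady travelling-wave solution of the one-dimensional solid-propellant combustion model described in the context, with $c<0$, and assume the solid and gas specific heats are equal, $c_s=c_p$. Then the burnt-gas temperature $T_f:=\lim_{x\to+\infty}T(x)$ satisfies $$T_f=T_0+\frac{Q_g+Q_p}{c_p}.$$
   Context: Travelling-wave frame: solid in $x<0$, gas in $x>0$, interface at $x=0$; $c<0$ is the constant regression velocity, $\rho_s>0$ the solid density, $\dot m:=-\rho_s c>0$. Constants: solid specific heat $c_s>0$ and conductivity $\lambda_s>0$, $D_s:=\lambda_s/(\rho_s c_s)$; gas specific heat $c_p>0$ and conductivity $\lambda_g>0$; common molar mass $M>0$ of the two gas species; stoichiometric coefficient $\nu<0$ of the reactant; molar heat of the gas reaction $Q_{mol}>0$, and $Q_g:=-Q_{mol}/(\nu M)>0$; pyrolysis heat $Q_p\in\mathbb R$ (per unit mass of propellant); initial temperature $T_0>0$. Unknowns: $T:\mathbb R\to(0,\infty)$ continuous, $C^2$ on $(-\infty,0]$ and on $[0,\infty)$ (one-sided derivatives at $0$); on $x>0$: $\rho>0,u$ of class $C^1$, reactant mass fraction $Y$ of class $C^2$, species diffusivity $D_g>0$ continuous, reaction rate $\omega(x)=\omega(T(x),Y(x))\ge0$ continuous. Equations: $-cT'-D_sT''=0$ for $x<0$; for $x>0$: $-c\rho'+(\rho u)'=0$, $\rho(u-c)Y'-(\rho D_gY')'=\nu M\omega$, $\rho(u-c)T'-(\lambda_g T'/c_p)'=\omega Q_{mol}/c_p$. Boundary/interface conditions: $T(x)\to T_0$ and $T'(x)\to0$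 as $x\to-\infty$; $T(0^-)=T(0^+)=T_s$; $\lambda_sT'(0^-)=\dot m Q_p+\lambda_gT'(0^+)$; $\rho(0^+)(u(0^+)-c)=-\rho_s c$; injection mass fraction $Y(0^-)=1$; $\dot m Y(0^-)=\dot m Y(0^+)-\rho(0^+)D_g(0^+)Y'(0^+)$; as $x\to+\infty$: $T(x)\to T_f$ (finite), $T'(x)\to0$, $Y(x)\to0$, $\rho D_gY'(x)\to0$. *)

(* Defs.v *)
From Stdlib Require Import Reals.
From Coquelicot Require Import Coquelicot.
Open Scope R_scope.

Definition lim_right (f : R -> R) (a l : R) : Prop :=
  filterlim f (at_right a) (locally l).
Definition lim_left (f : R -> R) (a l : R) : Prop :=
  filterlim f (at_left a) (locally l).
Definition lim_pinf (f : R -> R) (l : R) : Prop :=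
  filterlim f (Rbar_locally p_infty) (locally l).
Definition lim_minf (f : R -> R) (l : R) : Prop :=
  filterlim f (Rbar_locally m_infty) (locally l).

Definition C1_pos (f : R -> R) : Prop :=
  forall x, 0 < x -> ex_derive f x /\ continuous (Derive f) x.

Definition C2_pos (f : R -> R) : Prop :=
  forall x, 0 < x -> ex_derive f x /\ ex_derive (Derive f) x /\
                     continuous (Derive (Derive f)) x.

Definition C2_neg (f : R -> R) : Prop :=
  forall x, x < 0 -> ex_derive f x /\ ex_derive (Derive f) x /\
                     continuous (Derive (Derive f)) x.

(* Main.v *)
Require Import Defs.
From Stdlib Require Import Reals Lra.
From Coquelicot Require Import Coquelicot.
Open Scope R_scope.

Lemma G_deriv (T Y F : R -> R) a b k t : ex_derive T t -> ex_derive (Derive T) t -> ex_derive Y t -> ex_derive F t -> is_derive (fun x => a*T x - b*Derive T x + k*(a*Y x - F x)) t (a*Derive T t - b*Derive (Derive T) t + k*(a*Derive Y t - Derive F t)).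
Proof. intros. auto_derive. tauto. unfold Rminus. rewrite !Rmult_1_l. reflexivity. Qed.

Lemma H_deriv (T : R -> R) a b t : ex_derive T t -> ex_derive (Derive T) t -> is_derive (fun x => a*T x - b*Derive T x) t (a*Derive T t - b*Derive (Derive T) t).
Proof. intros. auto_derive. tauto. unfold Rminus. rewrite !Rmult_1_l. reflexivity. Qed.

Lemma K_deriv (P r : R -> R) c t : ex_derive P t -> ex_derive r t -> is_derive (fun x => P x - c*r x) t (Derive P t - c*Derive r t).
Proof. intros. auto_derive. tauto. unfold Rminus. rewrite !Rmult_1_l. reflexivity. Qed.

Lemma L_deriv (T : R -> R) a b t : ex_derive (Derive T) t -> is_derive (fun y => a * Derive T y / b) t (a * Derive (Derive T) t / b).
Proof. intros. auto_derive. tauto. unfold Rdiv. rewrite !Rmult_1_l. reflexivity. Qed.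

Lemma const_pos (f : R -> R) : (forall t, 0<t -> is_derive f t 0) -> forall x y, 0<x -> 0<y -> f x = f y.
Proof.
  intros H x y hx hy. destruct (Rtotal_order x y) as [h|[h|h]].
  - apply eq_is_derive; auto. intros t ht. apply H. lra.
  - now subst.
  - symmetry. apply eq_is_derive; auto. intros t ht. apply H. lra.
Qed.

Lemma const_neg (f : R -> R) : (forall t, t<0 -> is_derive f t 0) -> forall x y, x<0 -> y<0 -> f x = f y.
Proof.
  intros H x y hx hy. destruct (Rtotal_order x y) as [h|[h|h]].
  - apply eq_is_derive; auto. intros t ht. apply H. lra.
  - now subst.
  - symmetry. apply eq_is_derive; auto. intros t ht. apply H. lra.
Qed.

Section L.
Context {T : Type} {F : (T -> Prop) -> Prop} {FF : Filter F}.
Lemma lplus (f g : T -> R) a b : filterlim f F (locally a) -> filterlim g F (locally b) -> filterlim (fun x => f x + g x) F (locally (a+b)).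
Proof. intros Hf Hg. exact (filterlim_comp_2 f g Rplus Hf Hg (filterlim_plus a b)). Qed.
Lemma lmult (f g : T -> R) a b : filterlim f F (locally a) -> filterlim g F (locally b) -> filterlim (fun x => f x * g x) F (locally (a*b)).
Proof. intros Hf Hg. exact (filterlim_comp_2 f g Rmult Hf Hg (filterlim_mult a b)). Qed.
Lemma lconst (a : R) : filterlim (fun _ : T => a) F (locally a).
Proof. apply filterlim_const. Qed.
Lemma lopp (f : T -> R) a : filterlim f F (locally a) -> filterlim (fun x => - f x) F (locally (-a)).
Proof. intros Hf. exact (filterlim_comp _ _ _ f Ropp F (locally a) (locally (-a)) Hf (filterlim_opp a)). Qed.
Lemma lminus (f g : T -> R) a b : filterlim f F (locally a) -> filterlim g F (locally b) -> filterlim (fun x => f x - g x) F (locally (a-b)).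
Proof. intros Hf Hg. apply lplus; auto. apply lopp; auto. Qed.
End L.

Lemma proper' {F : (R -> Prop) -> Prop} (FF : ProperFilter F) : ProperFilter' F.
Proof.
  constructor.
  - intros H. destruct (filter_ex (F := F) _ H) as [x Hx]. exact Hx.
  - exact (filter_filter (F := F)).
Qed.

Lemma lim_ev_const {F : (R -> Prop) -> Prop} (FF : ProperFilter F) (f : R -> R) C l :
  F (fun x => f x = C) -> filterlim f F (locally l) -> l = C.
Proof.
  intros HC Hl.
  assert (FF1 : Filter F) by exact (filter_filter (F := F)).
  assert (Hc : filterlim f F (locally C)).
  { apply (filterlim_ext_loc (FF := FF1) (fun _ => C)).
    - apply (filter_imp (F := F)) with (2 := HC). intros; congruence.
    - apply (filterlim_const (FF := FF1)). }
  exact (@filterlim_locally_unique R R_AbsRing R_NormedModule F (proper' FF) f l C Hl Hc).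
Qed.

Lemma ev_right : at_right 0 (fun x => 0 < x).
Proof. unfold at_right, within. apply filter_forall. auto. Qed.
Lemma ev_left : at_left 0 (fun x => x < 0).
Proof. unfold at_left, within. apply filter_forall. auto. Qed.
Lemma ev_pinf : Rbar_locally p_infty (fun x => 0 < x).
Proof. exists 0. auto. Qed.
Lemma ev_minf : Rbar_locally m_infty (fun x => x < 0).
Proof. exists 0. auto. Qed.

Lemma cont_right (T : R -> R) : continuous T 0 -> filterlim T (at_right 0) (locally (T 0)).
Proof. intros H. eapply filterlim_filter_le_1; [|exact H]. intros P HP. unfold at_right, within. apply filter_imp with (2 := HP). auto. Qed.
Lemma cont_left (T : R -> R) : continuous T 0 -> filterlim T (at_left 0) (locally (T 0)).
Proof. intros H. eapply filterlim_filter_le_1; [|exact H]. intros P HP. unfold at_left, within. apply filter_imp with (2 := HP). auto. Qed.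
Theorem proposition3
  (c rho_s c_s lambda_s c_p lambda_g M nu Q_mol Q_p T0 : R)
  (T rho u Y D_g : R -> R) (omega : R -> R -> R)
  (dT_l dT_r dY_0 T_f : R) :
  c < 0 -> 0 < rho_s -> 0 < c_s -> 0 < lambda_s -> 0 < c_p -> 0 < lambda_g ->
  0 < M -> nu < 0 -> 0 < Q_mol -> 0 < T0 ->
  (* equal specific heats *)
  c_s = c_p ->
  let D_s := lambda_s / (rho_s * c_s) in
  let mdot := - rho_s * c in
  let Q_g := - Q_mol / (nu * M) in
  (* regularity of T: continuous, positive, C^2 on (-oo,0] and on [0,+oo) *)
  (forall x, 0 < T x) ->
  (forall x, continuous T x) ->
  C2_neg T -> C2_pos T ->
  lim_left (Derive T) 0 dT_l -> (exists d2, lim_left (Derive (Derive T)) 0 d2) ->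
  lim_right (Derive T) 0 dT_r -> (exists d2, lim_right (Derive (Derive T)) 0 d2) ->
  (* regularity of the gas unknowns on x > 0 (values at 0 are the limits 0^+) *)
  (forall x, 0 < x -> 0 < rho x) ->
  C1_pos rho -> C1_pos u -> C2_pos Y ->
  (forall x, 0 < x -> 0 < D_g x /\ continuous D_g x) ->
  (forall x, 0 < x -> 0 <= omega (T x) (Y x) /\
                     continuous (fun y => omega (T y) (Y y)) x) ->
  lim_right rho 0 (rho 0) -> lim_right u 0 (u 0) -> lim_right Y 0 (Y 0) ->
  lim_right D_g 0 (D_g 0) -> lim_right (Derive Y) 0 dY_0 ->
  (* equations *)
  (forall x, x < 0 -> - c * Derive T x - D_s * Derive (Derive T) x = 0) ->
  (forall x, 0 < x ->
     ex_derive (fun y => rho y * u y) x /\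
     - c * Derive rho x + Derive (fun y => rho y * u y) x = 0) ->
  (forall x, 0 < x ->
     ex_derive (fun y => rho y * D_g y * Derive Y y) x /\
     rho x * (u x - c) * Derive Y x
       - Derive (fun y => rho y * D_g y * Derive Y y) x
       = nu * M * omega (T x) (Y x)) ->
  (forall x, 0 < x ->
     rho x * (u x - c) * Derive T x
       - Derive (fun y => lambda_g * Derive T y / c_p) x
       = omega (T x) (Y x) * Q_mol / c_p) ->
  (* boundary and interface conditions *)
  lim_minf T T0 -> lim_minf (Derive T) 0 ->
  lambda_s * dT_l = mdot * Q_p + lambda_g * dT_r ->
  rho 0 * (u 0 - c) = - rho_s * c ->
  mdot * 1 = mdot * Y 0 - rho 0 * D_g 0 * dY_0 ->
  lim_pinf T T_f -> lim_pinf (Derive T) 0 -> lim_pinf Y 0 ->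
  lim_pinf (fun x => rho x * D_g x * Derive Y x) 0 ->
  T_f = T0 + (Q_g + Q_p) / c_p.
Proof.
  intros hc hrs hcs hls hcp hlg hM hnu hQ hT0 hcscp D_s mdot Q_g hTpos hTc hC2n hC2p
    hdTl [d2l _] hdTr [d2r _] hrho hC1r hC1u hC2Y hDg hom hr0 hu0 hY0 hD0 hdY0
    hsol hmass hspec hen hTm hdTm hflux hint hinj hTf hdTf hYf hFf.
  set (H := fun x => - c * T x - D_s * Derive T x).
  assert (HH : forall x, x < 0 -> H x = H (-1)).
  { intros x hx. apply const_neg; try lra. intros t ht.
    destruct (hC2n t ht) as [e1 [e2 _]].
    generalize (H_deriv T (-c) D_s t e1 e2). rewrite (hsol t ht). auto. }
  assert (E1a : (-c * T0 - D_s * 0) = H (-1)).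
  { apply (lim_ev_const (Rbar_locally_filter m_infty) H).
    - apply filter_imp with (2 := ev_minf). auto.
    - apply lminus; apply lmult; first [apply lconst | assumption]. }
  assert (E1b : (-c * T 0 - D_s * dT_l) = H (-1)).
  { apply (lim_ev_const (at_left_proper_filter 0) H).
    - apply filter_imp with (2 := ev_left). auto.
    - apply lminus; apply lmult; first [apply lconst | assumption | apply cont_left; auto]. }
  set (K := fun x => rho x * u x - c * rho x).
  assert (HK : forall x, 0 < x -> K x = K 1).
  { intros x hx. apply const_pos; try lra. intros t ht.
    destruct (hmass t ht) as [e1 e2].
    generalize (K_deriv (fun y => rho y * u y) rho c t e1 (proj1 (hC1r t ht))).
    replace (Derive (fun y => rho y * u y) t - c * Derive rho t) with 0 by lra. auto. }
  assert (EK : rho 0 * u 0 - c * rho 0 = K 1).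
  { apply (lim_ev_const (at_right_proper_filter 0) K).
    - apply filter_imp with (2 := ev_right). auto.
    - apply lminus; apply lmult; first [apply lconst | assumption]. }
  assert (Hm : forall x, 0 < x -> rho x * (u x - c) = mdot).
  { intros x hx. pose proof (HK x hx) as h. rewrite <- EK in h. unfold K in h. unfold mdot. lra. }
  set (b := lambda_g / c_p). set (k := Q_g / c_p).
  set (Fl := fun y => rho y * D_g y * Derive Y y).
  set (G := fun x => mdot * T x - b * Derive T x + k * (mdot * Y x - Fl x)).
  assert (HG : forall x, 0 < x -> G x = G 1).
  { intros x hx. apply const_pos; try lra. intros t ht.
    destruct (hC2p t ht) as [e1 [e2 _]].
    destruct (hC2Y t ht) as [e3 _].
    destruct (hspec t ht) as [e4 e5].
    generalize (G_deriv T Y Fl mdot b k t e1 e2 e3 e4).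
    assert (hL : Derive (fun y : R => lambda_g * Derive T y / c_p) t = lambda_g * Derive (Derive T) t / c_p) by exact (is_derive_unique _ _ _ (L_deriv T lambda_g c_p t e2)).
    assert (h6 := hen t ht). rewrite hL, (Hm t ht) in h6. rewrite (Hm t ht) in e5.
    fold Fl in e5.
    replace (mdot * Derive T t - b * Derive (Derive T) t + k * (mdot * Derive Y t - Derive Fl t)) with 0.
    auto.
    rewrite e5.
    assert (h7 : mdot * Derive T t - b * Derive (Derive T) t = omega (T t) (Y t) * Q_mol / c_p).
    { rewrite <- h6. unfold b. field. lra. }
    assert (h8 : k * (nu * M * omega (T t) (Y t)) = - (omega (T t) (Y t) * Q_mol / c_p)).
    { unfold k, Q_g. field. split; [lra|]. split; [lra|lra]. }
    lra. }
  assert (E2a : mdot * T 0 - b * dT_r + k * (mdot * Y 0 - rho 0 * D_g 0 * dY_0) = G 1).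
  { apply (lim_ev_const (at_right_proper_filter 0) G).
    - apply filter_imp with (2 := ev_right). intros; apply HG; auto.
    - unfold G, Fl.
      repeat first [ assumption | apply lconst | apply (cont_right T (hTc 0)) | apply lminus | apply lplus | apply lmult ]. }
  assert (E2b : mdot * T_f - b * 0 + k * (mdot * 0 - 0) = G 1).
  { apply (lim_ev_const (Rbar_locally_filter p_infty) G).
    - apply filter_imp with (2 := ev_pinf). intros; apply HG; auto.
    - unfold G, Fl.
      repeat first [ assumption | apply lconst | apply lminus | apply lplus | apply lmult ]. }
  assert (e1 : D_s * dT_l = c * (T0 - T 0)) by lra.
  assert (e2 : lambda_s * dT_l = rho_s * c_p * (D_s * dT_l)).
  { unfold D_s. rewrite <- hcscp. field. split; lra. }
  rewrite e1 in e2.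
  replace (mdot * Y 0 - rho 0 * D_g 0 * dY_0) with mdot in E2a by lra.
  assert (e3 : mdot * T_f = mdot * T 0 - b * dT_r + k * mdot) by lra.
  assert (e4 : c_p * (b * dT_r) = lambda_g * dT_r) by (unfold b; field; lra).
  assert (e5 : c_p * k = Q_g) by (unfold k; field; lra).
  assert (hm : mdot <> 0) by (unfold mdot; nra).
  apply Rmult_eq_reg_l with (mdot * c_p); [|nra].
  replace (mdot * c_p * T_f) with (c_p * (mdot * T_f)) by ring.
  rewrite e3.
  replace (c_p * (mdot * T 0 - b * dT_r + k * mdot)) with (c_p * mdot * T 0 - c_p * (b * dT_r) + (c_p * k) * mdot) by ring.
  rewrite e4, e5.
  replace (lambda_g * dT_r) with (lambda_s * dT_l - mdot * Q_p) by lra.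
  rewrite e2.
  unfold mdot. field. lra.
Qed.
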